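(* Let $a_1,a_2,k_1,k_2>0$ and $b_1,b_2\ge0$ be constants and consider the batch culture system $$\dot x_1=\left(\frac{a_1s}{k_1+s}-b_1\right)x_1,\quad \dot x_2=\left(\frac{a_2s}{k_2+s}-b_2\right)x_2,\quad \dot s=-\frac{a_1s}{k_1+s}x_1-\frac{a_2s}{k_2+s}x_2,\quad (x_1,x_2,s)\in(0,+\infty)^3,$$ with output $y=s$. For every $r>0$: if this system is not strongly observable in time $r$, then $a_1=a_2$, $b_1=b_2$ and $k_1=k_2$.
   Context: Solutions starting in $(0,+\infty)^3$ exist, are unique and remain in $(0,+\infty)^3$ for all $t\ge0$. The (input-free) system is strongly observable in time $r>0$ if for any two distinct initial states in $(0,+\infty)^3$, the $s$-components $s(t),\bar s(t)$ of the corresponding solutions satisfy $\max_{t\in[0,r]}|s(t)-\bar s(t)|>0$. *)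

(* Defs.v *)
From Stdlib Require Import Reals.
From Coquelicot Require Import Coquelicot.
Open Scope R_scope.

Definition monod (a k s : R) : R := a * s / (k + s).

Definition batch_solution (a1 a2 k1 k2 b1 b2 : R) (x1 x2 s : R -> R) : Prop :=
  (forall t, 0 <= t -> 0 < x1 t /\ 0 < x2 t /\ 0 < s t) /\
  (forall t, 0 < t ->
     is_derive x1 t ((monod a1 k1 (s t) - b1) * x1 t) /\
     is_derive x2 t ((monod a2 k2 (s t) - b2) * x2 t) /\
     is_derive s t (- monod a1 k1 (s t) * x1 t - monod a2 k2 (s t) * x2 t)) /\
  filterlim x1 (at_right 0) (locally (x1 0)) /\
  filterlim x2 (at_right 0) (locally (x2 0)) /\
  filterlim s (at_right 0) (locally (s 0)).

(* Strong observability in time r (output y = s): any two solutions with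
   distinct initial states have s-components differing somewhere on [0,r]
   (i.e. max_{t in [0,r]} |s(t) - sbar(t)| > 0). *)
Definition strongly_observable (a1 a2 k1 k2 b1 b2 r : R) : Prop :=
  forall x1 x2 s y1 y2 sb : R -> R,
    batch_solution a1 a2 k1 k2 b1 b2 x1 x2 s ->
    batch_solution a1 a2 k1 k2 b1 b2 y1 y2 sb ->
    (x1 0, x2 0, s 0) <> (y1 0, y2 0, sb 0) ->
    exists t, 0 <= t <= r /\ Rabs (s t - sb t) > 0.

(* Main.v *)
Require Import Defs.
From Stdlib Require Import Reals Lra Psatz Classical.
From Coquelicot Require Import Coquelicot.
Open Scope R_scope.

Lemma deriv_uniq (f : R -> R) x a b : is_derive f x a -> is_derive f x b -> a = b.
Proof. intros Ha Hb. apply is_derive_unique in Ha. apply is_derive_unique in Hb. congruence. Qed.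

Lemma loc_int (l u t : R) : l < t < u -> locally t (fun y => l < y < u).
Proof. intros [H1 H2]. apply (locally_interval _ t l u); simpl; auto. Qed.

Lemma deriv_ext_int (f g : R -> R) l u t a b :
  (forall y, l < y < u -> f y = g y) -> l < t < u ->
  is_derive f t a -> is_derive g t b -> a = b.
Proof.
  intros Heq Ht Ha Hb. apply (deriv_uniq g t); auto.
  apply (is_derive_ext_loc f); auto.
  generalize (loc_int l u t Ht). apply filter_imp. auto.
Qed.

Lemma d_mult (f g : R -> R) x df dg : is_derive f x df -> is_derive g x dg ->
  is_derive (fun t => f t * g t) x (df * g x + f x * dg).
Proof. intros. apply (is_derive_mult f g); auto. intros; apply Rmult_comm. Qed.

Lemma d_plus (f g : R -> R) x df dg : is_derive f x df -> is_derive g x dg ->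
  is_derive (fun t => f t + g t) x (df + dg).
Proof. intros. apply (is_derive_plus f g); auto. Qed.

Lemma d_minus (f g : R -> R) x df dg : is_derive f x df -> is_derive g x dg ->
  is_derive (fun t => f t - g t) x (df - dg).
Proof. intros. apply (is_derive_minus f g); auto. Qed.

Lemma d_comp (f g : R -> R) x df dg : is_derive f (g x) df -> is_derive g x dg ->
  is_derive (fun t => f (g t)) x (df * dg).
Proof. intros. rewrite Rmult_comm. apply (is_derive_comp f g); auto. Qed.

Lemma d_monod a k (s : R -> R) t ds : 0 < k -> 0 < s t -> is_derive s t ds ->
  is_derive (fun t => monod a k (s t)) t (a * k / (k + s t)^2 * ds).
Proof.
  intros Hk Hs Hd. apply (d_comp (fun x => monod a k x) s); auto.
  unfold monod. auto_derive. lra. field. lra.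
Qed.

Lemma rcont (f : R -> R) eps : 0 < eps -> filterlim f (at_right 0) (locally (f 0)) ->
  exists d, 0 < d /\ forall t, 0 < t < d -> Rabs (f t - f 0) < eps.
Proof.
  intros He Hf. apply filterlim_locally with (eps := mkposreal eps He) in Hf.
  destruct Hf as [d Hd]. exists d. split. apply cond_pos.
  intros t [Ht1 Ht2]. apply (Hd t); auto.
  unfold ball; simpl. unfold AbsRing_ball, abs, minus, plus, opp; simpl.
  replace (t + - 0) with t by ring. rewrite Rabs_right; lra.
Qed.

Lemma lemD (F F' s v : R -> R) l u :
  (forall t, l < t < u -> F (s t) = 0) -> (forall x, is_derive F x (F' x)) ->
  (forall t, l < t < u -> is_derive s t (v t) /\ v t <> 0) ->
  forall t, l < t < u -> F' (s t) = 0.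
Proof.
  intros H0 HF Hs t Ht. destruct (Hs t Ht) as [Hd Hv].
  assert (E : F' (s t) * v t = 0).
  { apply (deriv_ext_int (fun y => F (s y)) (fun _ => 0) l u t); auto.
    apply d_comp; auto. apply (is_derive_const (K:=R_AbsRing) 0). }
  apply Rmult_integral in E. destruct E; tauto.
Qed.

Lemma cubic0 (s v : R -> R) l u c0 c1 c2 c3 : l < u ->
  (forall t, l < t < u -> c0 + c1 * s t + c2 * (s t)^2 + c3 * (s t)^3 = 0) ->
  (forall t, l < t < u -> is_derive s t (v t) /\ v t <> 0) ->
  c0 = 0 /\ c1 = 0 /\ c2 = 0 /\ c3 = 0.
Proof.
  intros Hlu H0 Hs.
  assert (H1 := lemD (fun x => c0 + c1 * x + c2 * x^2 + c3 * x^3)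
     (fun x => c1 + 2 * c2 * x + 3 * c3 * x^2) s v l u H0
     ltac:(intros; auto_derive; auto; ring) Hs).
  assert (H2 := lemD (fun x => c1 + 2 * c2 * x + 3 * c3 * x^2)
     (fun x => 2 * c2 + 6 * c3 * x) s v l u H1
     ltac:(intros; auto_derive; auto; ring) Hs).
  assert (H3 := lemD (fun x => 2 * c2 + 6 * c3 * x)
     (fun x => 6 * c3) s v l u H2
     ltac:(intros; auto_derive; auto; ring) Hs).
  set (t := (l+u)/2). assert (Ht : l < t < u) by (unfold t; lra).
  specialize (H0 t Ht); specialize (H1 t Ht); specialize (H2 t Ht); specialize (H3 t Ht).
  simpl in *.
  assert (c3 = 0) by lra. subst c3.
  assert (c2 = 0) by lra. subst c2.
  assert (c1 = 0) by lra. subst c1. lra.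
Qed.

Definition Pp (a1 a2 k1 k2 b1 b2 x : R) :=
  a2*x*(k1+x) - a1*x*(k2+x) + (b1-b2)*(k1+x)*(k2+x).
Definition dPp (a1 a2 k1 k2 b1 b2 x : R) :=
  a2*(k1+x) + a2*x - a1*(k2+x) - a1*x + (b1-b2)*((k2+x)+(k1+x)).

Lemma monod_pos a k x : 0 < a -> 0 < k -> 0 < x -> 0 < monod a k x.
Proof. intros. unfold monod. apply Rdiv_lt_0_compat; nra. Qed.

Lemma alg1 a1 a2 k1 k2 b1 b2 σ S X1 Y1 X2 Y2 :
  0 < a1 -> 0 < a2 -> 0 < k1 -> 0 < k2 -> 0 < σ -> X1 - Y1 <> 0 ->
  monod a1 k1 σ * (X1 - Y1) + monod a2 k2 σ * (X2 - Y2) = 0 ->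
  a1*k1/(k1+σ)^2*S*(X1-Y1) + monod a1 k1 σ*((monod a1 k1 σ - b1)*X1 - (monod a1 k1 σ - b1)*Y1)
  + (a2*k2/(k2+σ)^2*S*(X2-Y2) + monod a2 k2 σ*((monod a2 k2 σ - b2)*X2 - (monod a2 k2 σ - b2)*Y2)) = 0 ->
  (k1 - k2) * S = Pp a1 a2 k1 k2 b1 b2 σ.
Proof.
  intros ha1 ha2 hk1 hk2 hs hu Hrel Hd.
  assert (hm2 := monod_pos a2 k2 σ ha2 hk2 hs).
  assert (Hu2 : X2 - Y2 = - (monod a1 k1 σ * (X1 - Y1)) / monod a2 k2 σ).
  { field_simplify_eq; [lra | lra]. }
  assert (E : a1*k1/(k1+σ)^2*S*(X1-Y1) + monod a1 k1 σ*((monod a1 k1 σ - b1)*(X1-Y1))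
  + (a2*k2/(k2+σ)^2*S*(X2-Y2) + monod a2 k2 σ*((monod a2 k2 σ - b2)*(X2-Y2))) = 0)
   by (rewrite <- Hd; ring).
  rewrite Hu2 in E. clear Hd Hu2 Hrel.
  set (u := X1 - Y1) in *.
  assert (E2 : (X1 - Y1) * monod a1 k1 σ * ((k1-k2)*S - Pp a1 a2 k1 k2 b1 b2 σ) / ((k1+σ)*(k2+σ)) = 0).
  { rewrite <- E. unfold u, monod, Pp. field. repeat split; try lra.

  }
  assert (hm1 := monod_pos a1 k1 σ ha1 hk1 hs).
  unfold Rdiv in E2. apply Rmult_integral in E2. destruct E2 as [E2|E2].
  - apply Rmult_integral in E2. destruct E2 as [E2|E2].
    + apply Rmult_integral in E2. destruct E2 as [E2|E2]. contradiction. lra.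
    + lra.
  - exfalso. assert (0 < (k1+σ)*(k2+σ)) by nra.
    apply Rinv_neq_0_compat in E2; auto; lra.
Qed.

Lemma alg2 a1 a2 k1 k2 b1 b2 σ S X1 X2 :
  0 < a1 -> 0 < a2 -> 0 < k1 -> 0 < k2 -> 0 < σ -> S <> 0 ->
  S = - monod a1 k1 σ * X1 - monod a2 k2 σ * X2 ->
  (k1 - k2) * S = Pp a1 a2 k1 k2 b1 b2 σ ->
  (k1 - k2) * ((- (a1*k1/(k1+σ)^2*S)) * X1 + (- monod a1 k1 σ) * ((monod a1 k1 σ - b1) * X1)
     - (a2*k2/(k2+σ)^2*S*X2 + monod a2 k2 σ * ((monod a2 k2 σ - b2) * X2)))
   = dPp a1 a2 k1 k2 b1 b2 σ * S ->
  σ*(k1+σ)*dPp a1 a2 k1 k2 b1 b2 σ - k1 * Pp a1 a2 k1 k2 b1 b2 σ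
   - (k1-k2)*(a1*σ^2 - b1*σ*(k1+σ)) = 0.
Proof.
  intros ha1 ha2 hk1 hk2 hs hS HS E1 Hd.
  assert (H1 : (k1 - k2) * ((- (a1*k1/(k1+σ)^2*S)) * X1 + (- monod a1 k1 σ) * ((monod a1 k1 σ - b1) * X1)
     - (a2*k2/(k2+σ)^2*S*X2 + monod a2 k2 σ * ((monod a2 k2 σ - b2) * X2)))
    = (k1/(σ*(k1+σ))*((k1-k2)*S) + (k1-k2)*(monod a1 k1 σ - b1))*S
      + (k1-k2)*monod a2 k2 σ*X2*((k1-k2)*S - Pp a1 a2 k1 k2 b1 b2 σ)/((k1+σ)*(k2+σ))).
  { rewrite HS. unfold monod, Pp. field. lra. }
  rewrite E1, Hd in H1. clear Hd.
  replace (Pp a1 a2 k1 k2 b1 b2 σ - Pp a1 a2 k1 k2 b1 b2 σ) with 0 in H1 by ring.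
  assert (H2 : dPp a1 a2 k1 k2 b1 b2 σ = k1/(σ*(k1+σ))*Pp a1 a2 k1 k2 b1 b2 σ + (k1-k2)*(monod a1 k1 σ - b1)).
  { apply Rmult_eq_reg_r with S; auto. rewrite H1. field. lra. }
  rewrite H2. unfold monod. field. lra.
Qed.

Lemma d_opp (f : R -> R) x df : is_derive f x df ->
  is_derive (fun t => - f t) x (- df).
Proof. intros. apply (is_derive_opp f); auto. Qed.

Lemma nearne (f g : R -> R) :
  filterlim f (at_right 0) (locally (f 0)) ->
  filterlim g (at_right 0) (locally (g 0)) -> f 0 <> g 0 ->
  exists d, 0 < d /\ forall t, 0 < t < d -> f t <> g t.
Proof.
  intros Hf Hg Hne.
  assert (He : 0 < Rabs (f 0 - g 0) / 2).
  { assert (f 0 - g 0 <> 0) by (intro; apply Hne; lra).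
    apply Rabs_pos_lt in H. lra. }
  destruct (rcont f _ He Hf) as [d1 [Hd1 H1]].
  destruct (rcont g _ He Hg) as [d2 [Hd2 H2]].
  exists (Rmin d1 d2). split. apply Rmin_glb_lt; auto.
  intros t Ht Heq.
  assert (t < d1) by (apply Rlt_le_trans with (Rmin d1 d2); [lra| apply Rmin_l]).
  assert (t < d2) by (apply Rlt_le_trans with (Rmin d1 d2); [lra| apply Rmin_r]).
  specialize (H1 t ltac:(lra)). specialize (H2 t ltac:(lra)). rewrite Heq in H1.
  revert H1 H2 He. unfold Rabs. repeat destruct Rcase_abs; lra.
Qed.

Lemma deriv_ext_int' (f g : R -> R) l u t a b : l < t < u ->
  is_derive f t a -> is_derive g t b -> (forall y, l < y < u -> f y = g y) -> a = b.
Proof. intros; eapply deriv_ext_int; eauto. Qed.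

Lemma Rmin_split t a b : t < Rmin a b -> t < a /\ t < b.
Proof. intros. split; eapply Rlt_le_trans; eauto; [apply Rmin_l | apply Rmin_r]. Qed.

Theorem theorem3p5 (a1 a2 k1 k2 b1 b2 : R) :
  0 < a1 -> 0 < a2 -> 0 < k1 -> 0 < k2 -> 0 <= b1 -> 0 <= b2 ->
  forall r : R, 0 < r ->
  ~ strongly_observable a1 a2 k1 k2 b1 b2 r ->
  a1 = a2 /\ b1 = b2 /\ k1 = k2.
Proof.
  intros ha1 ha2 hk1 hk2 hb1 hb2 r hr Hno.
  apply NNPP; intro Hc. apply Hno. clear Hno.
  intros x1 x2 s y1 y2 sb Hx Hy Hne.
  apply NNPP; intro Hnot.
  assert (Heq : forall t, 0 <= t <= r -> s t = sb t).
  { intros t Ht. apply NNPP; intro Hn. apply Hnot. exists t. split; auto.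
    apply Rabs_pos_lt. lra. }
  clear Hnot.
  destruct Hx as [Px [Dx [Cx1 [Cx2 Cx3]]]].
  destruct Hy as [Py [Dy [Cy1 [Cy2 Cy3]]]].
  assert (Hrel : forall t, 0 < t < r ->
    monod a1 k1 (s t) * (x1 t - y1 t) + monod a2 k2 (s t) * (x2 t - y2 t) = 0).
  { intros t Ht. destruct (Dx t ltac:(lra)) as [_ [_ D1]].
    destruct (Dy t ltac:(lra)) as [_ [_ D2]].
    assert (E := deriv_ext_int s sb 0 r t _ _ ltac:(intros; apply Heq; lra) Ht D1 D2).
    rewrite <- (Heq t) in E by lra. lra. }
  assert (Hs0 : s 0 = sb 0) by (apply Heq; lra).
  assert (Hd : exists d, 0 < d <= r /\ forall t, 0 < t < d -> x1 t - y1 t <> 0).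
  { destruct (Req_dec (x1 0) (y1 0)) as [E1|E1].
    - assert (E2 : x2 0 <> y2 0).
      { intro E2. apply Hne. rewrite E1, E2, Hs0. reflexivity. }
      destruct (nearne x2 y2 Cx2 Cy2 E2) as [d [Hd Hd']].
      exists (Rmin d r). split. split. apply Rmin_glb_lt; auto. apply Rmin_r.
      intros t Ht Hz. destruct Ht as [Ht1 Ht2]. apply Rmin_split in Ht2.
      apply (Hd' t). lra.
      specialize (Hrel t ltac:(lra)). rewrite Hz in Hrel.
      destruct (Px t ltac:(lra)) as [_ [_ Hst]].
      assert (hm := monod_pos a2 k2 (s t) ha2 hk2 Hst).
      assert (monod a2 k2 (s t) * (x2 t - y2 t) = 0) by lra.
      apply Rmult_integral in H. destruct H; lra.
    - destruct (nearne x1 y1 Cx1 Cy1 E1) as [d [Hd Hd']].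
      exists (Rmin d r). split. split. apply Rmin_glb_lt; auto. apply Rmin_r.
      intros t Ht Hz. destruct Ht as [Ht1 Ht2]. apply Rmin_split in Ht2.
      apply (Hd' t). lra. lra. }
  destruct Hd as [d [[hd hdr] Hu]].
  set (S := fun t => - monod a1 k1 (s t) * x1 t - monod a2 k2 (s t) * x2 t).
  assert (HSneg : forall t, 0 < t -> S t < 0).
  { intros t Ht. destruct (Px t ltac:(lra)) as [H1 [H2 H3]].
    assert (hm1 := monod_pos a1 k1 (s t) ha1 hk1 H3).
    assert (hm2 := monod_pos a2 k2 (s t) ha2 hk2 H3).
    unfold S. nra. }
  assert (Hsv : forall t, 0 < t < d -> is_derive s t (S t) /\ S t <> 0).
  { intros t Ht. split. apply Dx; lra. assert (S t < 0) by (apply HSneg; lra). lra. }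
  assert (E1 : forall t, 0 < t < d -> (k1 - k2) * S t = Pp a1 a2 k1 k2 b1 b2 (s t)).
  { intros t Ht. destruct (Dx t ltac:(lra)) as [D1 [D2 D3]].
    destruct (Dy t ltac:(lra)) as [D4 [D5 _]].
    rewrite <- (Heq t) in D4, D5 by lra.
    destruct (Px t ltac:(lra)) as [_ [_ Hst]].
    assert (HI : is_derive (fun t => monod a1 k1 (s t) * (x1 t - y1 t)
                   + monod a2 k2 (s t) * (x2 t - y2 t)) t
     (a1 * k1 / (k1 + s t)^2 * S t * (x1 t - y1 t) + monod a1 k1 (s t) *
        ((monod a1 k1 (s t) - b1) * x1 t - (monod a1 k1 (s t) - b1) * y1 t)
      + (a2 * k2 / (k2 + s t)^2 * S t * (x2 t - y2 t) + monod a2 k2 (s t) *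
        ((monod a2 k2 (s t) - b2) * x2 t - (monod a2 k2 (s t) - b2) * y2 t)))).
    { apply d_plus.
      - apply (d_mult (fun t => monod a1 k1 (s t)) (fun t => x1 t - y1 t)).
      apply d_monod; auto.
      apply d_minus; auto.
      - apply (d_mult (fun t => monod a2 k2 (s t)) (fun t => x2 t - y2 t)).
      apply d_monod; auto.
      apply d_minus; auto. }
    assert (Z := deriv_ext_int' _ (fun _ => 0) 0 r t _ _ ltac:(lra) HI
                  (is_derive_const (K:=R_AbsRing) 0 t)
                  ltac:(intros; apply Hrel; lra)).
    apply (alg1 a1 a2 k1 k2 b1 b2 (s t) (S t) (x1 t) (y1 t) (x2 t) (y2 t)); auto.
    all: first [exact Z | apply Hu; lra | apply Hrel; lra]. }
  destruct (Req_dec k1 k2) as [Hk|Hk].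
  - subst k2.
    assert (C := cubic0 s S 0 d ((b1-b2)*k1*k1) (a2*k1 - a1*k1 + (b1-b2)*(k1+k1))
                    (a2-a1+(b1-b2)) 0 hd
                    ltac:(intros t Ht; transitivity (Pp a1 a2 k1 k1 b1 b2 (s t));
                          [unfold Pp; ring | rewrite <- (E1 t Ht); ring])
                    Hsv).
    destruct C as [C0 [C1 [C2 _]]].
    apply Hc.
    assert (b1 = b2).
    { apply Rmult_integral in C0. destruct C0 as [C0|C0]; [|lra].
      apply Rmult_integral in C0. destruct C0 as [C0|C0]; lra. }
    subst b2. split; [lra|]. split; reflexivity.
  - assert (Z : forall t, 0 < t < d ->
       s t*(k1+s t)*dPp a1 a2 k1 k2 b1 b2 (s t) - k1 * Pp a1 a2 k1 k2 b1 b2 (s t)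
       - (k1-k2)*(a1*(s t)^2 - b1*(s t)*(k1+s t)) = 0).
    { intros t Ht. destruct (Dx t ltac:(lra)) as [D1 [D2 D3]].
      destruct (Px t ltac:(lra)) as [_ [_ Hst]].
      assert (Hf : is_derive (fun t => (k1 - k2) * S t) t
        ((k1 - k2) * ((- (a1*k1/(k1+s t)^2*S t)) * x1 t + (- monod a1 k1 (s t)) * ((monod a1 k1 (s t) - b1) * x1 t)
         - (a2*k2/(k2+s t)^2*S t*x2 t + monod a2 k2 (s t) * ((monod a2 k2 (s t) - b2) * x2 t))))).
      { apply is_derive_scal. unfold S. apply d_minus.
        - apply (d_mult (fun t => - monod a1 k1 (s t)) x1); auto.
          apply (d_opp (fun t => monod a1 k1 (s t))). apply d_monod; auto.
        - apply (d_mult (fun t => monod a2 k2 (s t)) x2); auto.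
          apply d_monod; auto. }
      assert (Hg : is_derive (fun t => Pp a1 a2 k1 k2 b1 b2 (s t)) t
                      (dPp a1 a2 k1 k2 b1 b2 (s t) * S t)).
      { apply (d_comp (fun x => Pp a1 a2 k1 k2 b1 b2 x) s); auto.
        unfold Pp, dPp. auto_derive; auto. ring. }
      assert (W := deriv_ext_int' _ _ 0 d t _ _ Ht Hf Hg E1).
      apply (alg2 a1 a2 k1 k2 b1 b2 (s t) (S t) (x1 t) (x2 t)); auto.
      apply Hsv; auto. }
    assert (C := cubic0 s S 0 d
      (- k1 * ((b1-b2)*k1*k2))
      ((k1-k2)*b1*k1)
      ((a2-a1+(b1-b2))*k1 + (a2*k1 - a1*k2 + (b1-b2)*(k1+k2)) - (k1-k2)*a1 + (k1-k2)*b1)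
      (2*(a2-a1+(b1-b2))) hd
      ltac:(intros t Ht; rewrite <- (Z t Ht); unfold Pp, dPp; ring) Hsv).
    destruct C as [C0 [C1 [C2 C3]]].
    assert (Hb : b1 = b2).
    { assert ((b1 - b2) * (k1*k1*k2) = 0) by lra.
      apply Rmult_integral in H. destruct H as [H|H]; [lra|].
      assert (0 < k1*k1*k2) by (apply Rmult_lt_0_compat; nra). lra. }
    subst b2.
    assert (Ha : a1 = a2) by lra. subst a2.
    assert (Hb1 : b1 = 0).
    { assert (((k1-k2)*k1) * b1 = 0) by lra.
      apply Rmult_integral in H. destruct H as [H|H]; [|lra].
      apply Rmult_integral in H. destruct H; lra. }
    subst b1.
    set (t := d/2). assert (Ht : 0 < t < d) by (unfold t; lra).
    specialize (E1 t Ht). unfold Pp in E1.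
    assert (HS : S t = a1 * s t).
    { apply Rmult_eq_reg_l with (k1 - k2). rewrite E1. ring. lra. }
    assert (S t < 0) by (apply HSneg; lra).
    destruct (Px t ltac:(lra)) as [_ [_ Hst]]. nra.
Qed.
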